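(* For every $r\in(\tfrac13,\tfrac12]$, $\gamma(\omega_r)>4$. In particular, the simulation cost of every entangled unsteerable two-qubit Werner state exceeds $4$, which is strictly greater than that of any separable Werner state $\omega_r$, $r\in[0,\tfrac13]$.
   Context: $\omega_r=r|\Psi^-\rangle\langle\Psi^-|+(1-r)\mathbb{I}\otimes\mathbb{I}/4$ with $|\Psi^-\rangle=(|01\rangle-|10\rangle)/\sqrt2$; it is separable iff $r\le\tfrac13$. The assemblage generated from $\rho_{AB}$ by POVMs $\{M_{a|x}\}$ on $A$ is $\sigma_{a|x}=\mathrm{Tr}_A[(M_{a|x}\otimes\mathbb{I})\rho_{AB}]$; an LHS model of size $n$ is a distribution $p(i)$ on $\{1,\dots,n\}$, states $\rho_i$ on $B$ and conditional probabilities $p(a|x,i)$ with $\sigma_{a|x}=\sum_{i=1}^n p(a|x,i)p(i)\rho_i$. $\gamma(\rho_{AB})$ is the smallest $n$ such that every assemblage generated from $\rho_{AB}$ by any family of POVMs on $A$ admits an LHS model of size $n$ ($+\infty$ if no such $n$). *)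

(* Defs.v *)
From HB Require Import structures.
From mathcomp Require Import all_boot all_order all_algebra.
From mathcomp Require Import complex reals.
Set Implicit Arguments. Unset Strict Implicit. Unset Printing Implicit Defensive.
Import Order.TTheory GRing.Theory Num.Theory.
Local Open Scope ring_scope.
Local Open Scope complex_scope.

Section Defs.
Variable R : realType.
Local Notation C := R[i].

Definition adj {m n} (A : 'M[C]_(m, n)) : 'M[C]_(n, m) :=
  \matrix_(i, j) (A j i)^*.

(* positive semidefinite: <v, A v> >= 0 for every vector v (in the complex
   order of R[i], i.e. real and nonnegative) *)
Definition psd {n} (A : 'M[C]_n) : Prop :=
  forall v : 'cV[C]_n, 0 <= (adj v *m A *m v) 0 0.

Definition density {n} (A : 'M[C]_n) : Prop := psd A /\ \tr A = 1.

Definition povm {n k} (M : 'I_k -> 'M[C]_n) : Prop :=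
  (forall a, psd (M a)) /\ \sum_(a < k) M a = 1%:M.

(* Two-qubit operators are 4x4 matrices; the basis vector |a b> has index
   mxvec_index a b (a : system A, b : system B). *)
Definition ab (a b : 'I_2) : 'I_(2 * 2) := mxvec_index a b.

(* Tr_A[(M (x) I) rho] *)
Definition ptrA_apply (M : 'M[C]_2) (rho : 'M[C]_(2 * 2)) : 'M[C]_2 :=
  \matrix_(j, j') \sum_(i < 2) \sum_(i' < 2) M i i' * rho (ab i' j) (ab i j').

Definition assemblage {X : Type} {k} (M : X -> 'I_k -> 'M[C]_2)
  (rho : 'M[C]_(2 * 2)) : X -> 'I_k -> 'M[C]_2 :=
  fun x a => ptrA_apply (M x a) rho.

Definition LHS_model_of_size {X : Type} {k} (sigma : X -> 'I_k -> 'M[C]_2)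
  (n : nat) : Prop :=
  exists (p : 'I_n -> R) (rhoB : 'I_n -> 'M[C]_2) (q : X -> 'I_n -> 'I_k -> R),
    [/\ (forall i, 0 <= p i), \sum_(i < n) p i = 1 &
        (forall i, density (rhoB i))] /\
    [/\ (forall x i a, 0 <= q x i a),
        (forall x i, \sum_(a < k) q x i a = 1) &
        (forall x a, sigma x a = \sum_(i < n) ((q x i a * p i)%:C *: rhoB i))].

Definition all_assemblages_LHS (rho : 'M[C]_(2 * 2)) (n : nat) : Prop :=
  forall (X : Type) (k : nat) (M : X -> 'I_k -> 'M[C]_2),
    (forall x, povm (M x)) -> LHS_model_of_size (assemblage M rho) n.

(* gamma(rho) > m, unfolding "gamma = smallest n with all_assemblages_LHS
   (+oo if none)": no n <= m works. *)
Definition gamma_gt (rho : 'M[C]_(2 * 2)) (m : nat) : Prop :=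
  forall n, (n <= m)%N -> ~ all_assemblages_LHS rho n.

(* singlet |Psi^-> = (|01> - |10>)/sqrt 2 ; projector entries
   psi(x) conj(psi(y)) with the normalisation 1/2 *)
Definition psim_un (x : 'I_(2 * 2)) : C :=
  if x == ab 0 1 then 1 else if x == ab 1 0 then -1 else 0.

Definition singlet_proj : 'M[C]_(2 * 2) :=
  \matrix_(x, y) (2^-1 * (psim_un x * (psim_un y)^*)).

Definition werner (r : R) : 'M[C]_(2 * 2) :=
  r%:C *: singlet_proj + ((1 - r) / 4)%:C *: 1%:M.

End Defs.

(* Main.v *)
Require Import Defs.
From HB Require Import structures.
From mathcomp Require Import all_boot all_order all_algebra.
From mathcomp Require Import complex reals.
From mathcomp Require Import ring lra zify.
Import Order.TTheory GRing.Theory Num.Theory.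
Local Open Scope ring_scope.
Local Open Scope complex_scope.
Lemma ab_eq a b c d : (ab a b == ab c d) = (a == c) && (b == d).
Proof. rewrite /ab /mxvec_index. apply/eqP/andP.
 move=> /cast_ord_inj /enum_rank_inj [-> ->]; done. by case=> /eqP-> /eqP->. Qed.

Lemma I2P (i : 'I_2) : i = ord0 \/ i = ord_max.
Proof. case: i => [[|[|//]] H]; [left|right]; exact/val_inj. Qed.
Lemma w0 : widen_ord (leqnSn 1) (@ord_max 0) = ord0. Proof. exact/val_inj. Qed.

Section S.
Variable R : realType.
Lemma cj0 : (0 : R[i])^* = 0. Proof. exact: conjc0. Qed.
Lemma cj1 : (1 : R[i])^* = 1. Proof. exact: conjc1. Qed.
Lemma cjN1 : (-1 : R[i])^* = -1. Proof. by rewrite rmorphN rmorph1. Qed.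
Local Notation C := R[i].
Lemma cjK (x : C) : x^*^* = x. Proof. by case: x => a b /=; rewrite opprK. Qed.
Lemma cjN (x : C) : (- x)^* = - x^*. Proof. by case: x => a b. Qed.
Lemma cjD (x y : C) : (x + y)^* = x^* + y^*.
Proof. case: x => a b; case: y => c d; rewrite /=. congr Complex; ring. Qed.
Lemma cjM (x y : C) : (x * y)^* = x^* * y^*.
Proof. case: x => a b; case: y => c d; rewrite /=. congr Complex; ring. Qed.
Lemma nconj (x : C) : Num.conj x = x^*. Proof. by []. Qed.
Definition cv2 (a b : C) : 'cV[C]_2 := \col_k (if k == ord0 then a else b).
Definition rank1 (w : 'cV[C]_2) : 'M[C]_2 := w *m adj w.
Definition mk2 (a b c d : C) : 'M[C]_2 :=
  \matrix_(i, j) if i == ord0 then (if j == ord0 then a else b)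
                 else (if j == ord0 then c else d).

Lemma quad2 (v : 'cV[C]_2) (M : 'M[C]_2) :
  (adj v *m M *m v) 0 0 =
  (v ord0 0)^* * (M ord0 ord0 * v ord0 0 + M ord0 ord_max * v ord_max 0) +
  (v ord_max 0)^* * (M ord_max ord0 * v ord0 0 + M ord_max ord_max * v ord_max 0).
Proof.
rewrite !mxE !big_ord_recr !big_ord0 /= !mxE !big_ord_recr !big_ord0 /= !mxE w0.
ring.
Qed.

Lemma rank1_psd (c : R) (w : 'cV[C]_2) : 0 <= c -> psd (c%:C *: rank1 w).
Proof.
move=> c0 v; rewrite quad2 /rank1 !mxE !big_ord1 !mxE.
set a := w ord0 0; set b := w ord_max 0; set x := v ord0 0; set y := v ord_max 0.
have -> : x^* * (c%:C * (a * a^*) * x + c%:C * (a * b^*) * y) +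
  y^* * (c%:C * (b * a^*) * x + c%:C * (b * b^*) * y) =
  c%:C * ((x^* * a + y^* * b) * (x^* * a + y^* * b)^*).
  rewrite rmorphD !rmorphM /= !conjCK. ring.
apply: mulr_ge0; first by rewrite ler0c.
exact: mulcJ_ge0.
Qed.

Lemma psd_1m (rho : 'M[C]_2) : density rho -> psd (1%:M - rho).
Proof.
move=> [Hp Ht] v.
pose w := cv2 (- (v ord_max 0)^*) ((v ord0 0)^*).
have := Hp w; rewrite !quad2 /w !mxE /=.
move: Ht; rewrite /mxtrace !big_ord_recr !big_ord0 /= w0 => Ht.
have E : rho ord0 ord0 = 1 - rho ord_max ord_max by rewrite -Ht; ring.
rewrite E !rmorphN /= !conjCK.
move=> H; apply: (le_trans H); rewrite le_eqVlt; apply/orP; left; apply/eqP.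
rewrite ?mxE /= ?nconj. ring.
Qed.


Lemma Tform (r : R) (M : 'M[C]_2) :
  ptrA_apply M (werner r) =
  (((1+r)/4)%:C * \tr M) *: 1%:M - (r/2)%:C *: M.
Proof.
apply/matrixP => j j'; rewrite !mxE /mxtrace !big_ord_recr !big_ord0 /= !mxE.
rewrite /psim_un !ab_eq w0 /=.
case: (I2P j) => ->; case: (I2P j') => -> /=.
all: rewrite ?raddf0 ?rmorph1 ?rmorphN1 /=.
all: field; done.
Qed.

Lemma effect_of (E : 'M[C]_2) (c1 c2 : R) (w1 w2 : 'cV[C]_2) :
  0 <= c1 -> 0 <= c2 -> E = c1%:C *: rank1 w1 -> 1%:M - E = c2%:C *: rank1 w2 ->
  psd E /\ psd (1%:M - E).
Proof. by move=> h1 h2 -> ->; split; apply: rank1_psd. Qed.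

Lemma mk2E a b c d i j : mk2 a b c d i j =
  if i == ord0 then (if j == ord0 then a else b) else (if j == ord0 then c else d).
Proof. by rewrite mxE. Qed.

Lemma Ei_def : ('i : C)^* = - 'i.
Proof. by apply/eqP; rewrite eq_complex /= oppr0 !eqxx. Qed.

Definition hh : C := (2^-1)%:C.
Definition E1 := mk2 1 0 0 0.
Definition E2 := mk2 0 0 0 1.
Definition E3 := mk2 hh hh hh hh.
Definition E4 := mk2 hh (- hh * 'i) (hh * 'i) hh.

Ltac entries := apply/matrixP; do 2 (let i := fresh "i" in move=> i; case: (I2P i) => ->);
  rewrite !mxE ?big_ord1 ?mxE /= ?nconj.

Ltac ceq := simpc; try reflexivity; apply/eqP; rewrite eq_complex /=;
  apply/andP; split; apply/eqP; field; done.

Lemma E1eff : psd E1 /\ psd (1%:M - E1).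
Proof.
apply: (@effect_of E1 1 1 (cv2 1 0) (cv2 0 1)) => //.
all: entries; ceq.
Qed.
Lemma E2eff : psd E2 /\ psd (1%:M - E2).
Proof.
apply: (@effect_of E2 1 1 (cv2 0 1) (cv2 1 0)) => //.
all: entries; ceq.
Qed.
Lemma E3eff : psd E3 /\ psd (1%:M - E3).
Proof.
apply: (@effect_of E3 (2^-1) (2^-1) (cv2 1 1) (cv2 1 (-1))) => //.
1,2: by rewrite invr_ge0 ler0n.
all: entries; rewrite /hh; ceq.
Qed.
Lemma E4eff : psd E4 /\ psd (1%:M - E4).
Proof.
apply: (@effect_of E4 (2^-1) (2^-1) (cv2 1 'i) (cv2 1 (-'i))) => //.
1,2: by rewrite invr_ge0 ler0n.
all: entries; rewrite /hh; ceq.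
Qed.

Lemma o01 : (ord0 == ord_max :> 'I_2) = false. Proof. by []. Qed.
Lemma o10 : (ord_max == ord0 :> 'I_2) = false. Proof. by []. Qed.
Lemma trE1 : \tr E1 = 1. Proof. by rewrite /mxtrace !big_ord_recr !big_ord0 /= !mk2E w0 /= add0r addr0. Qed.
Lemma trE2 : \tr E2 = 1. Proof. by rewrite /mxtrace !big_ord_recr !big_ord0 /= !mk2E w0 /= add0r add0r. Qed.
Lemma trE3 : \tr E3 = 1. Proof. rewrite /mxtrace !big_ord_recr !big_ord0 /= !mk2E w0 /= /hh. simpc. ceq. Qed.
Lemma trE4 : \tr E4 = 1. Proof. rewrite /mxtrace !big_ord_recr !big_ord0 /= !mk2E w0 /= /hh. simpc. ceq. Qed.
Definition trE := (trE1, trE2, trE3, trE4).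

Definition Tr (r : R) (M : 'M[C]_2) := ptrA_apply M (werner r).

Lemma mk2D a b c d a' b' c' d' : mk2 a b c d + mk2 a' b' c' d' = mk2 (a+a') (b+b') (c+c') (d+d').
Proof. by apply/matrixP => i j; rewrite !mxE; case: (i == ord0); case: (j == ord0). Qed.
Lemma mk2Z x a b c d : x *: mk2 a b c d = mk2 (x*a) (x*b) (x*c) (x*d).
Proof. by apply/matrixP => i j; rewrite !mxE; case: (i == ord0); case: (j == ord0). Qed.
Lemma mk2_eta (Y : 'M[C]_2) : Y = mk2 (Y ord0 ord0) (Y ord0 ord_max) (Y ord_max ord0) (Y ord_max ord_max).
Proof. apply/matrixP => i j; rewrite mk2E; case: (I2P i) => ->; case: (I2P j) => -> //. Qed.
Lemma Tr_mk2 (r : R) a b c d : Tr r (mk2 a b c d) =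
  let t := ((1 + r) / 4)%:C * (a + d) in let h := (r/2)%:C in
  mk2 (t - h * a) (- (h * b)) (- (h * c)) (t - h * d).
Proof.
rewrite /Tr Tform /mxtrace !big_ord_recr !big_ord0 /= !mk2E w0 /= add0r.
apply/matrixP => i j; rewrite !mxE. case: (I2P i) => ->; case: (I2P j) => -> /=; ring.
Qed.

Definition lam3 r (Y : 'M[C]_2) : C := - (2 / r%:C) * (Y ord0 ord_max + Y ord_max ord0).
Definition lam4 r (Y : 'M[C]_2) : C := 2 * (Y ord0 ord_max - Y ord_max ord0) / (r%:C * 'i).
Definition lam1 r (Y : 'M[C]_2) : C := (Y ord0 ord0 + Y ord_max ord_max) - (lam3 r Y + lam4 r Y) / 2
   - (Y ord0 ord0 - Y ord_max ord_max) / r%:C.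
Definition lam2 r (Y : 'M[C]_2) : C := (Y ord0 ord0 + Y ord_max ord_max) - (lam3 r Y + lam4 r Y) / 2
   + (Y ord0 ord0 - Y ord_max ord_max) / r%:C.

Lemma decomp (r : R) (Y : 'M[C]_2) : r != 0 ->
  Y = lam1 r Y *: Tr r E1 + lam2 r Y *: Tr r E2 + lam3 r Y *: Tr r E3 + lam4 r Y *: Tr r E4.
Proof.
move=> r0.
have rc0 : r%:C != 0 by rewrite eq_complex /= eqxx andbT.
have i0 : ('i : C) != 0 by rewrite eq_complex /= andbC oner_eq0.
rewrite /E1 /E2 /E3 /E4 !Tr_mk2 /= !mk2Z !mk2D {1}[Y]mk2_eta.
rewrite /lam1 /lam2 /lam3 /lam4 /hh.
congr mk2; field; apply/andP; split; first [exact: i0 | exact: rc0].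
Qed.

Lemma main_contra (r : R) : 3^-1 < r -> gamma_gt (werner r) 4.
Proof.
move=> Hr1 n Hn Hall.
have r0 : r != 0.
  apply: lt0r_neq0; apply: lt_trans Hr1; rewrite invr_gt0; exact: ltr0n.
pose Eff := {M : 'M[C]_2 | psd M /\ psd (1%:M - M)}.
pose Mx : Eff -> 'I_2 -> 'M[C]_2 :=
  fun x a => if a == ord0 then sval x else 1%:M - sval x.
have Hpovm : forall x, povm (Mx x).
  move=> x; split.
  - move=> a; rewrite /Mx; case: (a == ord0); [exact: (proj1 (svalP x)) | exact: (proj2 (svalP x))].
  - by rewrite big_ord_recr big_ord1 /Mx /= addrC subrK.
have [p [rhoB [q [[Hp0 Hp1 Hrho] [Hq0 Hq1 Hsig]]]]] := Hall Eff 2%N Mx Hpovm.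
pose Am : 'M[C]_(n, 2*2) := \matrix_(i < n) ((p i)%:C *: mxvec (rhoB i)).
pose qrow (x : Eff) : 'rV[C]_n := \row_i (q x i ord0)%:C.
have Hkey : forall x : Eff, mxvec (Tr r (sval x)) = qrow x *m Am.
  move=> x.
  have -> : Tr r (sval x) = assemblage Mx (werner r) x ord0 by [].
  rewrite Hsig linear_sum mulmx_sum_row; apply: eq_bigr => i _.
  by rewrite rowK mxE linearZ /= scalerA rmorphM.
have HE : forall x : Eff, (mxvec (Tr r (sval x)) <= Am)%MS.
  by move=> x; rewrite Hkey submxMl.
have Hspan : forall Y, (mxvec Y <= Am)%MS.
  move=> Y; rewrite (decomp r Y r0) !linearD !linearZ /=.
  apply: addmx_sub; [apply: addmx_sub; [apply: addmx_sub|]|]; apply: scalemx_sub.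
  - exact: (HE (exist _ E1 E1eff)).
  - exact: (HE (exist _ E2 E2eff)).
  - exact: (HE (exist _ E3 E3eff)).
  - exact: (HE (exist _ E4 E4eff)).
have Hfull : row_full Am.
  rewrite -sub1mx; apply/row_subP => k; rewrite row1 -[X in (X <= _)%MS]vec_mxK.
  exact: Hspan.
have n4 : n = (2*2)%N.
  have := rank_leq_row Am; rewrite (eqP Hfull) => h; lia.
subst n.
have Hunit : Am \in unitmx by rewrite -row_full_unit.
pose xi (i : 'I_(2*2)) : Eff := exist _ (rhoB i) (conj (proj1 (Hrho i)) (@psd_1m (rhoB i) (Hrho i))).
pose S := \sum_i ((q (xi i) i ord0 * p i)%:C : C).
have S_ge0 : 0 <= S.
  by apply: sumr_ge0 => i _; rewrite ler0c mulr_ge0.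
have Hq : forall i, qrow (xi i) = mxvec (Tr r (rhoB i)) *m invmx Am.
  by move=> i; rewrite -[rhoB i]/(sval (xi i)) Hkey mulmxK.
have Htr : forall i, \tr (rhoB i) = 1 by move=> i; case: (Hrho i).
have HT : forall i, (p i)%:C *: mxvec (Tr r (rhoB i)) =
   (((1+r)/4)%:C * (p i)%:C) *: mxvec 1%:M - (r/2)%:C *: row i Am.
  move=> i; rewrite rowK /Tr Tform Htr mulr1 linearB !linearZ /=.
  by rewrite scalerDr !scalerA; congr (_ + _); congr (_ *: _); exact: mulrC.
have HS1 : S = \sum_i ((p i)%:C *: mxvec (Tr r (rhoB i)) *m invmx Am) 0 i.
  apply: eq_bigr => i _; rewrite -scalemxAl mxE -Hq mxE rmorphM mulrC.
  by [].
pose al := mxvec (1%:M : 'M[C]_2) *m invmx Am.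
set X := Am *m invmx Am.
have HS2 : S = ((1+r)/4)%:C * \sum_i ((p i)%:C * al 0 i) - (r/2)%:C * \tr X.
  rewrite HS1 /mxtrace !mulr_sumr -sumrB; apply: eq_bigr => i _.
  rewrite HT mulmxBl -!scalemxAl -row_mul -/X !mxE.
  by rewrite mulrA.
have Hal : \sum_i (p i)%:C * al 0 i = 2.
  have E := mulmxKV Hunit (mxvec (1%:M : 'M[C]_2)).
  have := congr1 (fun v => \tr (vec_mx v)) E; rewrite /= mxvecK mxtrace1 mulmx_sum_row.
  rewrite !linear_sum /= => <-; apply: eq_bigr => i _.
  rewrite rowK !linearZ /= mxvecK ?mxtraceZ Htr.
  by rewrite mulr1 mulrC.
have HX : X = 1%:M by rewrite /X mulmxV.
move: S_ge0; rewrite HS2 Hal HX mxtrace1.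
have -> : ((1+r)/4)%:C * 2 - (r/2)%:C * (2*2)%:R = ((1 - 3*r)/2)%:C.
  by field.
rewrite lecE /= => /andP [_ h2]; lra.
Qed.
End S.

Local Close Scope complex_scope.

Theorem corollary1 (R : realType) (r : R) :
  3^-1 < r -> r <= 2^-1 -> gamma_gt (werner r) 4.
Proof. by move=> h _; apply: main_contra. Qed.
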